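(* Let $V_\mu,V_\nu$ be non-isomorphic indecomposable $\Lambda$-modules and $s,t\ge1$ integers such that $V_\lambda\cong sV_\mu\oplus tV_\nu$ is exceptional. Then in $\mathscr H(\Lambda)$ $$\langle u_{s\mu\oplus t\nu}\rangle=v^{\langle t\nu,s\mu\rangle-2st\dim_k\mathrm{Hom}_\Lambda(V_\nu,V_\mu)}\langle u_{s\mu}\rangle\langle u_{t\nu}\rangle,$$ where $u_{s\mu}$ denotes the class of $sV_\mu$ (the direct sum of $s$ copies), etc.
   Context: $\Lambda$ is a finite-dimensional hereditary algebra over a finite field $k$ with $q$ elements, $v=\sqrt q$. $\mathcal P$ is the set of isomorphism classes of finite-dimensional $\Lambda$-modules, with representatives $V_\alpha$. Euler form $\langle\alpha,\beta\rangle=\dim_k\mathrm{Hom}(V_\alpha,V_\beta)-\dim_k\mathrm{Ext}^1(V_\alpha,V_\beta)$, $\varepsilon(\alpha)=\langle\alpha,\alpha\rangle$; $g^\lambda_{\alpha\beta}$ is the number of submodules $B\subseteq V_\lambda$ with $B\cong V_\beta$, $V_\lambda/B\cong V_\alpha$. The Hall algebra $\mathscr H(\Lambda)$ has basis $\langle u_\alpha\rangle=v^{-\dim_kV_\alpha+\varepsilon(\alpha)}u_\alpha$ with $\langle u_\alpha\rangle\langle u_\beta\rangle=v^{-\langle\beta,\alpha\rangle}\sum_\lambda g^\lambda_{\alpha\beta}\langle u_\lambda\rangle$. Exceptional means $\mathrm{Ext}^1(V,V)=0$. *)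

(* Defs.v *)
From HB Require Import structures.
From mathcomp Require Import all_boot all_order all_algebra all_fingroup all_field.
From Stdlib Require Import ClassicalEpsilon.
Set Implicit Arguments. Unset Strict Implicit. Unset Printing Implicit Defensive.
Import Order.TTheory GRing.Theory Num.Theory.
Local Open Scope ring_scope.

Definition asb (P : Prop) : bool :=
  if excluded_middle_informative P then true else false.

(* dim_k of the subspace {x | P x} of a k-vector space vT
   (P is required to describe a subspace; then this is its dimension). *)
Definition dimP (k : fieldType) (vT : vectType k) (P : vT -> Prop) : nat :=
  \dim (epsilon (inhabits (0%VS : {vspace vT}))
                (fun U : {vspace vT} => forall x, x \in U <-> P x)).

Section Modules.
Variables (k : finFieldType) (L : falgType k).

(* A finite-dimensional (right) L-module: k^n (row vectors) with
   x . a = x *m ract a. *)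
Record rep := Rep { rdim : nat; ract : L -> 'M[k]_rdim }.

Definition is_module (V : rep) : Prop :=
  [/\ forall (c : k) (a b : L), ract V (c *: a + b) = c *: ract V a + ract V b,
      ract V 1 = 1%:M
    & forall a b : L, ract V (a * b) = ract V a *m ract V b].

(* L-linear maps V -> W, x |-> x *m f *)
Definition is_hom (V W : rep) (f : 'M[k]_(rdim V, rdim W)) : Prop :=
  forall a : L, ract V a *m f = f *m ract W a.

Definition iso (V W : rep) : Prop :=
  exists f : 'M[k]_(rdim V, rdim W), [/\ is_hom f, row_free f & row_full f].

Definition dsum (V W : rep) : rep :=
  @Rep (rdim V + rdim W) (fun a => block_mx (ract V a) 0 0 (ract W a)).

Definition zero_rep : rep := @Rep 0 (fun _ => 0).

Fixpoint nsum (s : nat) (V : rep) : rep :=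
  if s is s'.+1 then dsum V (nsum s' V) else zero_rep.

Definition indecomposable (V : rep) : Prop :=
  [/\ is_module V, (0 < rdim V)%N &
      forall W1 W2, is_module W1 -> is_module W2 -> iso V (dsum W1 W2) ->
        rdim W1 = 0%N \/ rdim W2 = 0%N].

Definition hom_dim (V W : rep) : nat :=
  dimP (fun f : 'M[k]_(rdim V, rdim W) => is_hom f).

(* Ext^1_L(V, W) = Der(L, Hom_k(V,W)) / Inn(L, Hom_k(V,W)): derivations
   classify extensions 0 -> W -> E -> V -> 0 with E = V (+) W as k-spaces
   and action [[ract V a, d a], [0, ract W a]]; inner ones are split. *)
Definition is_der (V W : rep) (d : 'Hom(L, 'M[k]_(rdim V, rdim W))) : Prop :=
  forall a b : L, d (a * b) = ract V a *m d b + d a *m ract W b.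

Definition is_inner (V W : rep) (d : 'Hom(L, 'M[k]_(rdim V, rdim W))) : Prop :=
  exists f : 'M[k]_(rdim V, rdim W), forall a : L, d a = ract V a *m f - f *m ract W a.

Definition ext_dim (V W : rep) : nat :=
  (dimP (@is_der V W) - dimP (@is_inner V W))%N.

Definition euler (V W : rep) : int := (hom_dim V W)%:Z - (ext_dim V W)%:Z.

Definition exceptional (V : rep) : Prop := ext_dim V V = 0%N.

Definition projective (P : rep) : Prop :=
  is_module P /\
  forall (M : rep) (g : 'M[k]_(rdim M, rdim P)), is_module M -> is_hom g ->
    row_full g -> exists s : 'M[k]_(rdim P, rdim M), is_hom s /\ s *m g = 1%:M.

Definition hereditary : Prop :=
  forall (P U : rep) (f : 'M[k]_(rdim U, rdim P)),
    projective P -> is_module U -> is_hom f -> row_free f -> projective U.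

(* Hall number g^Lam_{A B}: number of submodules B' of V_Lam (subspaces of
   'rV_n, represented canonically by U = <<U>>) with B' ~ V_B, V_Lam/B' ~ V_A *)
Definition hall (Lam A B : rep) : nat :=
  #|[set U : 'M[k]_(rdim Lam) |
      [&& U == genmx U,
          asb (exists f : 'M[k]_(rdim B, rdim Lam),
                 [/\ is_hom f, row_free f & (f == U)%MS]) &
          asb (exists g : 'M[k]_(rdim Lam, rdim A),
                 [/\ is_hom g, row_full g & (kermx g == U)%MS])]]|.

Definition vq : algC := sqrtC (#|k|%:R).

(* Elements of the Hall algebra are represented by their coefficient
   function on modules w.r.t. the basis <u_lambda> (constant on iso classes).
   hbasis V = <u_[V]>;  hmul_basis A B = <u_A><u_B>
   = v^{-<B,A>} sum_lambda g^lambda_{A B} <u_lambda>. *)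
Definition hbasis (V : rep) : rep -> algC :=
  fun X => if asb (iso X V) then 1 else 0.

Definition hmul_basis (A B : rep) : rep -> algC :=
  fun X => vq ^ (- euler B A) * (hall X A B)%:R.

End Modules.

(* Main.v *)
Require Import Defs.
From HB Require Import structures.
From mathcomp Require Import all_boot all_order all_algebra all_fingroup all_field.
From Stdlib Require Import ClassicalEpsilon Classical.
Import Order.TTheory GRing.Theory Num.Theory.
Local Open Scope ring_scope.
Set Implicit Arguments. Unset Strict Implicit. Unset Printing Implicit Defensive.

Section Basic.
Variables (k : finFieldType) (L : falgType k).
Local Notation rep := (rep L).
Local Notation act := (@Defs.ract k L).
Local Notation hom V W := (@is_hom k L V W).

Lemma homM (V W Z : rep) f g : hom V W f -> hom W Z g -> hom V Z (f *m g).
Proof. by move=> hf hg a; rewrite mulmxA hf -!mulmxA hg. Qed.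

Lemma hom1 (V : rep) : hom V V 1%:M.
Proof. by move=> a; rewrite mulmx1 mul1mx. Qed.

Lemma hom0 (V W : rep) : hom V W 0.
Proof. by move=> a; rewrite mulmx0 mul0mx. Qed.

Lemma homD (V W : rep) f g : hom V W f -> hom V W g -> hom V W (f + g).
Proof. by move=> hf hg a; rewrite mulmxDr mulmxDl hf hg. Qed.

Lemma homN (V W : rep) f : hom V W f -> hom V W (- f).
Proof. by move=> hf a; rewrite mulmxN mulNmx hf. Qed.

Lemma homB (V W : rep) f g : hom V W f -> hom V W g -> hom V W (f - g).
Proof. by move=> hf hg; apply: homD => //; apply: homN. Qed.

Lemma homZ (V W : rep) c f : hom V W f -> hom V W (c *: f).
Proof. by move=> hf a; rewrite -scalemxAr hf scalemxAl. Qed.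

Lemma hom_inv (V W : rep) (P : 'M_(rdim W, rdim V)) (Q : 'M_(rdim V, rdim W)) :
  hom W V P -> P *m Q = 1%:M -> Q *m P = 1%:M -> hom V W Q.
Proof.
move=> hP PQ QP a.
have -> : act V a *m Q = Q *m P *m act V a *m Q by rewrite QP mul1mx.
by rewrite -(mulmxA Q P) -hP !mulmxA -(mulmxA _ P Q) PQ mulmx1.
Qed.

Lemma inv_free_full m n (P : 'M[k]_(m, n)) (Q : 'M[k]_(n, m)) :
  P *m Q = 1%:M -> Q *m P = 1%:M -> row_free Q /\ row_full Q.
Proof.
move=> PQ QP; split; first by apply/row_freeP; exists P.
by apply/row_fullP; exists P.
Qed.

Lemma iso_inv (V W : rep) (P : 'M_(rdim W, rdim V)) (Q : 'M_(rdim V, rdim W)) :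
  hom W V P -> P *m Q = 1%:M -> Q *m P = 1%:M -> iso V W.
Proof.
move=> hP PQ QP; exists Q; have [h1 h2] := inv_free_full PQ QP.
by split=> //; apply: hom_inv hP PQ QP.
Qed.

Lemma iso_invP (V W : rep) : iso V W ->
  exists Q : 'M_(rdim V, rdim W), exists P : 'M_(rdim W, rdim V),
   [/\ hom V W Q, hom W V P, Q *m P = 1%:M & P *m Q = 1%:M].
Proof.
case=> Q [hQ fr fu].
have [P QP] := row_freeP fr.
have PQ : P *m Q = 1%:M.
  by apply: (row_full_inj fu); rewrite mulmxA QP mul1mx mulmx1.
by exists Q, P; split=> //; apply: hom_inv hQ QP PQ.
Qed.

End Basic.
Lemma asbP (P : Prop) : reflect P (asb P).
Proof. by rewrite /asb; case: excluded_middle_informative => h; constructor. Qed.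

Section DimP.
Variables (K : fieldType) (vT : vectType K) (P : vT -> Prop).
Hypotheses (P0 : P 0) (PD : forall x y, P x -> P y -> P (x + y))
  (PZ : forall c x, P x -> P (c *: x)).

Lemma subspace_exists : exists U : {vspace vT}, forall x, x \in U <-> P x.
Proof.
pose Q n := asb (exists U : {vspace vT}, (forall x, x \in U -> P x) /\ \dim U = n).
have Qex : exists n, Q n.
  exists 0%N; apply/asbP.
  exists 0%VS; split; last by rewrite dimv0.
  by move=> x; rewrite memv0 => /eqP->.
have Qub : forall n, Q n -> (n <= \dim {: vT})%N.
  move=> n /asbP [U [_ <-]].
  exact: dimvS (subvf U).
case: (ex_maxnP Qex Qub) => n /asbP [U [UP dU]] maxn.
exists U => x; split; first exact: UP.
move=> Px; apply/negPn/negP => xU.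
have sub : forall y, y \in (U + <[x]>)%VS -> P y.
  move=> y /memv_addP [u uU [v /vlineP [c ->] ->]].
  by apply: PD; [apply: UP | apply: PZ].
have : Q (\dim (U + <[x]>)) by apply/asbP; exists (U + <[x]>)%VS.
move/maxn; rewrite -dU => le.
have : (U == U + <[x]>)%VS by rewrite eqEdim addvSl le.
move/eqP => eU; move: xU; rewrite eU; apply/negP/negPn; by have := memv_add (mem0v U) (memv_line x); rewrite add0r.
Qed.

Lemma dimP_spec : exists U : {vspace vT}, (forall x, x \in U <-> P x) /\ dimP P = \dim U.
Proof.
exists (epsilon (inhabits (0%VS : {vspace vT}))
                (fun U : {vspace vT} => forall x, x \in U <-> P x)); split => //.
exact: (epsilon_spec _ _ subspace_exists).
Qed.
End DimP.

Section Count.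
Variables (k : finFieldType) (L : falgType k).
Local Notation rep := (rep L).
Local Notation act := (@Defs.ract k L).
Local Notation hom V W := (@is_hom k L V W).

Definition homset (V W : rep) := [set f : 'M[k]_(rdim V, rdim W) | asb (hom V W f)].

Lemma card_homset (V W : rep) : #|homset V W| = (#|k| ^ hom_dim V W)%N.
Proof.
have [U [UP dU]] := @dimP_spec _ _ (@is_hom k L V W) (hom0 V W) (@homD _ _ V W)
   (fun c f => @homZ _ _ V W c f).
change (hom_dim V W) with (dimP (@is_hom k L V W)); rewrite dU -card_vspace; apply: eq_card => f; rewrite inE.
by apply/asbP/idP => /UP.
Qed.

Lemma hom_col (V W Z : rep) f g : hom V Z f -> hom W Z g -> hom (dsum V W) Z (col_mx f g).
Proof.
move=> hf hg a; rewrite /= mul_block_col mul_col_mx !mul0mx addr0 add0r.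
by rewrite hf hg.
Qed.

Lemma hom_colK (V W Z : rep) h : hom (dsum V W) Z h ->
  hom V Z (usubmx h) /\ hom W Z (dsubmx h).
Proof.
move=> hh; split=> a.
  have := hh a; rewrite -{1 2}(vsubmxK h) /= mul_block_col mul_col_mx !mul0mx addr0.
  by case/eq_col_mx.
have := hh a; rewrite -{1 2}(vsubmxK h) /= mul_block_col mul_col_mx !mul0mx add0r.
by case/eq_col_mx.
Qed.

Lemma hom_row (V W Z : rep) f g : hom Z V f -> hom Z W g -> hom Z (dsum V W) (row_mx f g).
Proof.
move=> hf hg a; rewrite /= mul_row_block mul_mx_row !mulmx0 addr0 add0r.
by rewrite hf hg.
Qed.

Lemma hom_rowK (V W Z : rep) h : hom Z (dsum V W) h ->
  hom Z V (lsubmx h) /\ hom Z W (rsubmx h).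
Proof.
move=> hh; split=> a.
  have := hh a; rewrite -{1 2}(hsubmxK h) /= mul_row_block mul_mx_row !mulmx0 addr0.
  by case/eq_row_mx.
have := hh a; rewrite -{1 2}(hsubmxK h) /= mul_row_block mul_mx_row !mulmx0 add0r.
by case/eq_row_mx.
Qed.

Lemma card_homset_dsuml (V W Z : rep) :
  #|homset (dsum V W) Z| = (#|homset V Z| * #|homset W Z|)%N.
Proof.
rewrite -cardsX -(card_imset _ (f := fun p => col_mx p.1 p.2)); last first.
  by move=> [a b] [c d] /= /eq_col_mx [-> ->].
apply: eq_card => h; rewrite !inE; apply/asbP/imsetP => [hh | [[f g]]].
  have [h1 h2] := hom_colK hh.
  by exists (usubmx h, dsubmx h); rewrite ?vsubmxK // inE /= !inE; apply/andP; split; apply/asbP.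
rewrite inE /= !inE => /andP [/asbP hf /asbP hg] ->; exact: hom_col.
Qed.

Lemma card_homset_dsumr (V W Z : rep) :
  #|homset Z (dsum V W)| = (#|homset Z V| * #|homset Z W|)%N.
Proof.
rewrite -cardsX -(card_imset _ (f := fun p => row_mx p.1 p.2)); last first.
  by move=> [a b] [c d] /= /eq_row_mx [-> ->].
apply: eq_card => h; rewrite !inE; apply/asbP/imsetP => [hh | [[f g]]].
  have [h1 h2] := hom_rowK hh.
  by exists (lsubmx h, rsubmx h); rewrite ?hsubmxK // inE /= !inE; apply/andP; split; apply/asbP.
rewrite inE /= !inE => /andP [/asbP hf /asbP hg] ->; exact: hom_row.
Qed.

Lemma card_homset0l (Z : rep) : #|homset (zero_rep L) Z| = 1%N.
Proof.
rewrite -(cards1 (0 : 'M[k]_(0, rdim Z))); apply: eq_card => f.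
rewrite !inE flatmx0 eqxx; apply/asbP; exact: hom0.
Qed.

Lemma card_homset0r (Z : rep) : #|homset Z (zero_rep L)| = 1%N.
Proof.
rewrite -(cards1 (0 : 'M[k]_(rdim Z, 0))); apply: eq_card => f.
rewrite !inE thinmx0 eqxx; apply/asbP; exact: hom0.
Qed.

Lemma card_homset_nsum (V W : rep) s t :
  #|homset (nsum t V) (nsum s W)| = (#|homset V W| ^ (s * t))%N.
Proof.
have hr : forall Z : rep, #|homset Z (nsum s W)| = (#|homset Z W| ^ s)%N.
  move=> Z; elim: s => [|s IH] /=; first by rewrite card_homset0r.
  by rewrite card_homset_dsumr IH expnS.
elim: t => [|t IH] /=; first by rewrite card_homset0l muln0.
by rewrite card_homset_dsuml IH hr mulnS expnD.
Qed.

End Count.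

Section RankStable.
Variables (F : fieldType) (n : nat) (e : 'M[F]_n).
Let r i := \rank (e ^+ i).

Lemma rdec i : (r i.+1 <= r i)%N.
Proof. by rewrite /r exprSr -mulmxE mxrankM_maxl. Qed.

Lemma rstep i : r i.+1 = r i -> r i.+2 = r i.+1.
Proof.
move=> eq1.
have sub : (e ^+ i.+1 <= e ^+ i)%MS by rewrite exprS -mulmxE submxMl.
have sub2 : (e ^+ i <= e ^+ i.+1)%MS.
  have [_ <-] := mxrank_leqif_sup sub.
  by rewrite /r in eq1; rewrite eq1.
have E : (e ^+ i.+1 :=: e ^+ i)%MS by apply/eqmxP; rewrite sub sub2.
by rewrite /r [e ^+ i.+2]exprSr [e ^+ i.+1 in RHS]exprSr -!mulmxE (eqmxMr e E).
Qed.

Lemma rstab i : r i.+1 = r i -> forall j, r (i + j) = r i.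
Proof.
move=> eq1.
have st : forall j, r (i + j).+1 = r (i + j).
  by elim=> [|j IH]; [rewrite addn0 | rewrite addnS; apply: rstep].
by elim=> [|j IH]; [rewrite addn0 | rewrite addnS st].
Qed.

Lemma rank_stable j : \rank (e ^+ (n + j)) = \rank (e ^+ n).
Proof.
have [i [lein eqi]] : exists i, (i <= n)%N /\ r i.+1 = r i.
  apply: NNPP => hn.
  have lt : forall i, (i <= n)%N -> (r i.+1 < r i)%N.
    move=> i lei; have := rdec i; rewrite leq_eqVlt => /orP [/eqP h|//].
    by exfalso; apply: hn; exists i.
  have bnd : forall i, (i <= n.+1)%N -> (r i + i <= n)%N.
    elim=> [|i IH] lei; first by rewrite addn0 /r expr0 -idmxE mxrank1.
    rewrite addnS (leq_trans _ (IH (ltnW lei))) //.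
    by rewrite -addSn leq_add2r lt.
  by have := bnd n.+1 (leqnn _); rewrite addnS ltnNge leq_addl.
have h1 := rstab eqi (n - i + j); have h2 := rstab eqi (n - i).
rewrite addnA subnKC // in h1; rewrite subnKC // in h2.
by rewrite /r in h1 h2; rewrite h1 h2.
Qed.
End RankStable.

Section Fitting.
Variables (k : finFieldType) (L : falgType k).
Local Notation rep := (rep L).
Local Notation act := (@Defs.ract k L).
Local Notation hom V W := (@is_hom k L V W).

Definition subrep (V : rep) r (M : 'M[k]_(r, rdim V)) : rep :=
  @Rep k L r (fun a => M *m act V a *m pinvmx M).

Section Sub.
Variables (V : rep) (r : nat) (M : 'M[k]_(r, rdim V)).
Hypothesis stab : forall a, (M *m act V a <= M)%MS.

Lemma subrepE a : act (subrep M) a *m M = M *m act V a.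
Proof. exact: mulmxKpV. Qed.

Lemma subrep_hom : hom (subrep M) V M.
Proof. by move=> a; rewrite subrepE. Qed.

Lemma subrep_module : is_module V -> row_free M -> is_module (subrep M).
Proof.
case=> lin one mul fr; split.
- move=> c a b /=; rewrite lin mulmxDr mulmxDl.
  by rewrite -scalemxAr -scalemxAl.
- apply: (row_free_inj fr) => /=; rewrite one mulmx1 mulmxKpV ?submx_refl //.
  by rewrite mul1mx.
- move=> a b; apply: (row_free_inj fr) => /=.
  have K : forall c, M *m act V c *m pinvmx M *m M = M *m act V c.
    by move=> c; rewrite mulmxKpV ?stab.
  by rewrite K mul -[RHS]mulmxA K [RHS]mulmxA K mulmxA.
Qed.
End Sub.

Lemma homX (V : rep) e m : hom V V e -> hom V V (e ^+ m).
Proof.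
move=> he; elim: m => [|m IH]; first by rewrite expr0 -idmxE; apply: hom1.
by rewrite exprS -mulmxE; apply: homM.
Qed.

Lemma fitting (V : rep) e : indecomposable V -> hom V V e ->
  e ^+ rdim V = 0 \/ e \in unitmx.
Proof.
case=> modV pos dec he.
set n := rdim V; set E := e ^+ n.
have hE : hom V V E by apply: homX.
have rEE : \rank (E *m E) = \rank E by rewrite mulmxE -exprD rank_stable.
have rcap : \rank (E :&: kermx E)%MS = 0%N.
  have := mxrank_mul_ker E E; rewrite rEE -{2}[\rank E]addn0; exact: addnI.
set M1 := row_base E; set M2 := row_base (kermx E).
have st1 : forall a, (M1 *m act V a <= M1)%MS.
  move=> a; rewrite (eqmxMr _ (eq_row_base E)) (eq_row_base E).
  by have := submxMl (act V a) E; rewrite hE.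
have st2 : forall a, (M2 *m act V a <= M2)%MS.
  move=> a; rewrite (eqmxMr _ (eq_row_base _)) (eq_row_base _).
  by rewrite sub_kermx -mulmxA hE mulmxA mulmx_ker mul0mx.
set W1 := subrep M1; set W2 := subrep M2.
have m1 : is_module W1 by apply: subrep_module => //; apply: row_base_free.
have m2 : is_module W2 by apply: subrep_module => //; apply: row_base_free.
set P := col_mx M1 M2.
have hP : hom (dsum W1 W2) V P by apply: hom_col; apply: subrep_hom.
have rEn : (\rank E <= n)%N by apply: rank_leq_row.
have rP : \rank P = n.
  rewrite /P -addsmxE.
  have := mxrank_sum_cap M1 M2.
  rewrite (cap_eqmx (eq_row_base E) (eq_row_base (kermx E))) rcap addn0 => ->.
  by rewrite (eq_row_base E) (eq_row_base (kermx E)) mxrank_ker subnKC.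
have frP : row_free P.
  by rewrite /row_free rP /n mxrank_ker subnKC.
have fuP : row_full P by rewrite /row_full rP.
have [Q PQ] := row_freeP frP.
have QP : Q *m P = 1%:M.
  by apply: (row_full_inj fuP); rewrite mulmxA PQ mul1mx mulmx1.
have := dec W1 W2 m1 m2 (iso_inv hP PQ QP).
rewrite /= => -[r0 | r0].
  by left; apply/eqP; rewrite -mxrank_eq0; apply/eqP.
right.
rewrite mxrank_ker in r0.
have rE : \rank E = n by apply/eqP; rewrite eqn_leq rEn -subn_eq0 r0.
have EE : E = e ^+ (n.-1) *m e by rewrite mulmxE -exprSr prednK.
have le : (\rank E <= \rank e)%N by rewrite EE mxrankM_maxr.
by rewrite -row_free_unit /row_free eqn_leq rank_leq_row /= -{1}rE le.
Qed.

End Fitting.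

Section Radical.
Variables (k : finFieldType) (L : falgType k).
Local Notation rep := (rep L).
Local Notation act := (@Defs.ract k L).
Local Notation hom V W := (@is_hom k L V W).

Lemma unit_nilp n (N : 'M[k]_n) m : N ^+ m = 0 -> (1%:M - N) \in unitmx.
Proof.
move=> Nm; have := subrX1 N m; rewrite Nm sub0r => h.
have : (1%:M - N) *m (\sum_(i < m) N ^+ i) = 1%:M.
  by rewrite mulmxE -opprB mulNr -h opprK.
by case/mulmx1_unit.
Qed.

Definition rad (V W : rep) (x : 'M[k]_(rdim V, rdim W)) :=
  forall y, hom W V y -> (1%:M - x *m y) \in unitmx.

Lemma hom_invmx (V : rep) u : hom V V u -> u \in unitmx -> hom V V (invmx u).
Proof. by move=> hu uu; apply: hom_inv hu (mulmxV uu) (mulVmx uu). Qed.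

Lemma unitmx_pos n (A : 'M[k]_n) : (0 < n)%N -> A \in unitmx -> A != 0.
Proof.
move=> pos uA; apply/eqP=> A0; have := mxrank_unit uA.
by rewrite A0 mxrank0 => n0; rewrite -n0 in pos.
Qed.

Lemma rad_indec (mu nu : rep) x : indecomposable mu -> indecomposable nu ->
  ~ iso mu nu -> hom nu mu x -> rad x.
Proof.
move=> imu inu niso hx y hy.
set z := x *m y; have hz : hom nu nu z by apply: homM.
case: (fitting inu hz) => [zn | uz]; first exact: unit_nilp zn.
set w := invmx z; have hw : hom nu nu w by apply: hom_invmx.
set e := y *m w *m x; have he : hom mu mu e by apply: homM => //; apply: homM.
have zw : z *m w = 1%:M by rewrite mulmxV.
have ee : e *m e = e.
  by rewrite /e -!mulmxA (mulmxA x y) -/z (mulmxA z) zw mul1mx.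
have xe : x *m e = x by rewrite /e !mulmxA -/z zw mul1mx.
case: (fitting imu he) => [en | ue].
  have eX : forall m, e ^+ m.+1 = e.
    by elim=> [|m IH]; rewrite ?expr1 // exprS IH -mulmxE ee.
  case: imu => _ pos _; have : e ^+ (rdim mu) = e by have := eX (rdim mu).-1; rewrite prednK.
  rewrite en => e0; have x0 : x = 0 by rewrite -xe -e0 mulmx0.
  case: inu => _ posn _.
  by have := unitmx_pos posn uz; rewrite /z x0 mul0mx eqxx.
have e1 : e = 1%:M.
  by apply: (row_free_inj (A := e)); [rewrite row_free_unit | rewrite ee mul1mx].
exfalso; apply: niso.
apply: (iso_inv (P := x) (Q := y *m w)) => //.
by rewrite mulmxA -/z.
Qed.

End Radical.

Section Radical2.
Variables (k : finFieldType) (L : falgType k).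
Local Notation rep := (rep L).
Local Notation act := (@Defs.ract k L).
Local Notation hom V W := (@is_hom k L V W).

Lemma rad_dsumr (Z V W : rep) x1 x2 : hom Z V x1 -> hom Z W x2 ->
  rad x1 -> rad x2 -> rad (W := dsum V W) (row_mx x1 x2).
Proof.
move=> h1 h2 r1 r2 y hy; have [hy1 hy2] := hom_colK hy.
rewrite -(vsubmxK y) mul_row_col.
set y1 := usubmx y; set y2 := dsubmx y.
set u := 1%:M - x1 *m y1.
have uu : u \in unitmx by apply: r1.
have hu : hom Z Z u by apply: homB; [apply: hom1 | apply: homM].
have hv : hom W Z (y2 *m invmx u) by apply: homM => //; apply: hom_invmx.
have -> : 1%:M - (x1 *m y1 + x2 *m y2) = (1%:M - x2 *m (y2 *m invmx u)) *m u.
  rewrite mulmxBl mul1mx -!mulmxA mulVmx // mulmx1 /u.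
  by rewrite opprD addrA.
by rewrite unitmx_mul uu andbT; apply: r2.
Qed.

Lemma rad_dsuml (Z V W : rep) x1 x2 : hom V Z x1 -> hom W Z x2 ->
  rad x1 -> rad x2 -> rad (V := dsum V W) (col_mx x1 x2).
Proof.
move=> h1 h2 r1 r2 y hy; have [hy1 hy2] := hom_rowK hy.
rewrite -(hsubmxK y) mul_col_row.
set y1 := lsubmx y; set y2 := rsubmx y.
set u := 1%:M - x1 *m y1.
have uu : u \in unitmx by apply: r1.
have hu : hom V V u by apply: homB; [apply: hom1 | apply: homM].
set y' := y2 + y1 *m invmx u *m x1 *m y2.
have hy' : hom Z W y'.
  apply: homD => //; apply: homM => //; apply: homM => //; apply: homM => //.
  exact: hom_invmx.
have -> : 1%:M - block_mx (x1 *m y1) (x1 *m y2) (x2 *m y1) (x2 *m y2) =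
   block_mx 1%:M 0 (- x2 *m y1 *m invmx u) 1%:M *m
   block_mx u (- (x1 *m y2)) 0 (1%:M - x2 *m y').
  rewrite mulmx_block !mul1mx ?mul0mx ?mulmx0 ?addr0 ?add0r.
  rewrite (scalar_mx_block (rdim V) (rdim W)) opp_block_mx add_block_mx ?oppr0 ?add0r ?addr0.
  congr block_mx.
  - by rewrite -!mulmxA mulVmx // mulmx1 mulNmx.
  - rewrite !mulNmx mulmxN opprK /y' mulmxDr opprD addrA.
    have -> : x2 *m (y1 *m invmx u *m x1 *m y2) = x2 *m y1 *m invmx u *m (x1 *m y2).
      by rewrite !mulmxA.
    rewrite (addrC _ 1%:M) -addrA; congr (_ + _).
    by rewrite addrC subrK.
rewrite unitmx_mul !unitmxE det_lblock det_ublock !det1 mul1r unitr1 /=.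
rewrite unitrM -!unitmxE uu /=.
by apply: r2.
Qed.

Lemma rad0r (Z : rep) x : rad (W := zero_rep L) (V := Z) x.
Proof. by move=> y _; rewrite (thinmx0 x) mul0mx subr0 unitmx1. Qed.

Lemma rad0l (Z : rep) x : rad (V := zero_rep L) (W := Z) x.
Proof.
move=> y _; have -> : 1%:M - x *m y = 1%:M :> 'M_0 by rewrite !(flatmx0 (_ : 'M_(0,0))).
exact: unitmx1.
Qed.

Lemma rad_nsum (mu nu : rep) s t x : indecomposable mu -> indecomposable nu ->
  ~ iso mu nu -> hom (nsum t nu) (nsum s mu) x -> rad x.
Proof.
move=> imu inu niso.
have hr : forall s (x : 'M_(rdim nu, rdim (nsum s mu))), hom nu (nsum s mu) x -> rad x.
  elim=> [|s' IH] x' hx /=; first exact: rad0r.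
  rewrite -(hsubmxK x'); have [ha hb] := hom_rowK hx.
  apply: rad_dsumr => //; [exact: rad_indec ha | exact: IH].
elim: t x => [|t IH] x hx /=; first exact: rad0l.
rewrite -(vsubmxK x); have [ha hb] := hom_colK hx.
by apply: rad_dsuml => //; [apply: hr | apply: IH].
Qed.

End Radical2.

Lemma linfunE_ (K : fieldType) (aT rT : vectType K) (f : aT -> rT)
  (lf : forall (c : K) u v, f (c *: u + v) = c *: f u + f v) v : linfun f v = f v.
Proof.
have lin : linear f by move=> c u w; rewrite lf.
pose F : {linear aT -> rT} := HB.pack f (GRing.isLinear.Build K aT rT *:%R f lin).
exact: (lfunE F v).
Qed.

Section Ext.
Variables (k : finFieldType) (L : falgType k).
Local Notation rep := (rep L).
Local Notation act := (@Defs.ract k L).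
Local Notation hom V W := (@is_hom k L V W).

Lemma Mx0 m n p (A : 'M[k]_(m,n)) : A *m (0 : 'M[k]_(n,p)) = 0.
Proof. exact: mulmx0. Qed.
Lemma M0x m n p (A : 'M[k]_(n,p)) : (0 : 'M[k]_(m,n)) *m A = 0.
Proof. exact: mul0mx. Qed.
Lemma Sc0 m n (c : k) : c *: (0 : 'M[k]_(m,n)) = 0.
Proof. exact: scaler0. Qed.
Lemma Ad0 m n (A : 'M[k]_(m,n)) : A + 0 = A.
Proof. exact: addr0. Qed.
Lemma A0d m n (A : 'M[k]_(m,n)) : 0 + A = A.
Proof. exact: add0r. Qed.

Lemma dsum_actE (V W : rep) a :
  act (dsum V W) a = block_mx (act V a) 0 0 (act W a).
Proof. by []. Qed.

Lemma module_dsum (V W : rep) : is_module V -> is_module W -> is_module (dsum V W).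
Proof.
case=> l1 o1 m1 [l2 o2 m2]; split.
- move=> c a b; rewrite !dsum_actE l1 l2 scale_block_mx add_block_mx.
  by rewrite !Sc0 !Ad0.
- by rewrite dsum_actE o1 o2 -scalar_mx_block.
- move=> a b; rewrite !dsum_actE m1 m2 mulmx_block.
  by rewrite !Mx0 !M0x !Ad0 !A0d.
Qed.

Lemma module_zero : is_module (zero_rep L).
Proof. by split=> //= *; rewrite ?flatmx0 ?scaler0 ?addr0 //; apply: flatmx0. Qed.

Lemma module_nsum (V : rep) s : is_module V -> is_module (nsum s V).
Proof.
move=> mV; elim: s => [|s IH] /=; first exact: module_zero.
exact: module_dsum.
Qed.

Section DerInn.
Variables (V W : rep).
Hypotheses (mV : is_module V) (mW : is_module W).

Lemma inner_der d : @is_inner k L V W d -> is_der d.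
Proof.
case: mV mW => _ _ m1 [_ _ m2] [F dF] a b.
rewrite !dF m1 m2 mulmxBr mulmxBl !mulmxA.
by rewrite addrA subrK.
Qed.

Lemma der0 : @is_der k L V W 0.
Proof. by move=> a b; rewrite !lfunE /= mulmx0 mul0mx addr0. Qed.

Lemma derD d1 d2 : @is_der k L V W d1 -> @is_der k L V W d2 -> is_der (d1 + d2)%R.
Proof.
move=> h1 h2 a b; rewrite !add_lfunE h1 h2 mulmxDr mulmxDl.
by rewrite addrACA.
Qed.

Lemma derZ c d : @is_der k L V W d -> is_der (c *: d)%R.
Proof.
move=> h a b; rewrite !scale_lfunE h scalerDr.
by rewrite scalemxAr scalemxAl.
Qed.

Lemma inn0 : @is_inner k L V W 0.
Proof. by exists 0 => a; rewrite lfunE /= mulmx0 mul0mx subr0. Qed.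

Lemma innD d1 d2 : @is_inner k L V W d1 -> @is_inner k L V W d2 -> is_inner (d1 + d2)%R.
Proof.
move=> [F1 h1] [F2 h2]; exists (F1 + F2) => a.
by rewrite add_lfunE h1 h2 mulmxDr mulmxDl opprD addrACA.
Qed.

Lemma innZ c d : @is_inner k L V W d -> is_inner (c *: d)%R.
Proof.
move=> [F h]; exists (c *: F) => a.
by rewrite scale_lfunE h scalerBr scalemxAr scalemxAl.
Qed.

Lemma ext0_inner : ext_dim V W = 0%N -> forall d, @is_der k L V W d -> is_inner d.
Proof.
have [U1 [U1P d1]] := @dimP_spec _ _ (@is_der k L V W) der0 derD derZ.
have [U2 [U2P d2]] := @dimP_spec _ _ (@is_inner k L V W) inn0 innD innZ.
rewrite /ext_dim d1 d2 => /eqP; rewrite subn_eq0 => le d hd.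
have sub : (U2 <= U1)%VS by apply/subvP => x /U2P /inner_der /U1P.
have : U2 == U1 by rewrite eqEdim sub le.
by move/eqP => e; apply/U2P; rewrite e; apply/U1P.
Qed.
End DerInn.

End Ext.

Section Split.
Variables (k : finFieldType) (L : falgType k).
Local Notation rep := (rep L).
Local Notation act := (@Defs.ract k L).
Local Notation hom V W := (@is_hom k L V W).

Variables (A B X : rep).
Hypotheses (mA : is_module A) (mB : is_module B) (mX : is_module X).
Variables (f : 'M[k]_(rdim B, rdim X)) (g : 'M[k]_(rdim X, rdim A)).
Hypotheses (hf : hom B X f) (frf : row_free f) (hg : hom X A g) (fug : row_full g)
  (kerg : (kermx g == f)%MS).
Hypothesis Hinn : forall d, @is_der k L A B d -> is_inner d.

Lemma split_ses : exists P : 'M[k]_(rdim A + rdim B, rdim X),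
  exists Q : 'M[k]_(rdim X, rdim A + rdim B),
  [/\ hom (dsum A B) X P, hom X (dsum A B) Q, P *m Q = 1%:M, Q *m P = 1%:M
    & f *m Q = row_mx 0 1%:M].
Proof.
set s := pinvmx g.
have sg : s *m g = 1%:M by rewrite -{1}[s]mul1mx mulmxKpV // sub1mx.
have fg : f *m g = 0 by apply/eqP; rewrite -sub_kermx; case/andP: kerg.
have inK : forall m (Y : 'M_(m, rdim X)), Y *m g = 0 -> Y *m pinvmx f *m f = Y.
  move=> m Y Y0; apply: mulmxKpV; apply: submx_trans (proj1 (andP kerg)).
  by rewrite sub_kermx Y0.
have fpf : f *m pinvmx f = 1%:M.
  by apply: (row_free_inj frf); rewrite mul1mx mulmxKpV ?submx_refl.
case: mA mX => lA _ mulA [lX _ mulX].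
pose dfun x := (s *m act X x - act A x *m s) *m pinvmx f.
have dlin : forall (c : k) u v, dfun (c *: u + v) = c *: dfun u + dfun v.
  move=> c u v; rewrite /dfun lA lX.
  have e1 : s *m (c *: act X u + act X v) = c *: (s *m act X u) + s *m act X v.
    by rewrite mulmxDr -scalemxAr.
  have e2 : (c *: act A u + act A v) *m s = c *: (act A u *m s) + act A v *m s.
    by rewrite mulmxDl -scalemxAl.
  by rewrite e1 e2 opprD addrACA -scalerBr [LHS]mulmxDl -scalemxAl.
have dK : forall x, dfun x *m f = s *m act X x - act A x *m s.
  move=> x; apply: inK; rewrite mulmxBl -mulmxA hg mulmxA sg -mulmxA sg.
  by rewrite mul1mx mulmx1 subrr.
pose d : 'Hom(L, 'M[k]_(rdim A, rdim B)) := linfun dfun.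
have dE : forall x, d x = dfun x by move=> x; apply: linfunE_.
have dder : @is_der k L A B d.
  move=> a b; rewrite !dE; apply: (row_free_inj frf) => /=.
  rewrite (dK (a * b)) [RHS]mulmxDl -[act A a *m dfun b *m f]mulmxA dK.
  rewrite -[dfun a *m _ *m f]mulmxA hf [dfun a *m _]mulmxA (dK a) mulX mulA.
  by rewrite mulmxBr mulmxBl !mulmxA [RHS]addrC addrA subrK.
have [F dF] := Hinn dder.
set s' := s + F *m f.
have hs' : hom A X s'.
  move=> x.
  have e : act A x *m F *m f - F *m act B x *m f = s *m act X x - act A x *m s.
    by rewrite -mulmxBl -dF dE dK.
  have e' : s *m act X x = act A x *m F *m f - F *m act B x *m f + act A x *m s.
    by rewrite e subrK.
  rewrite /s' mulmxDr mulmxDl -[F *m f *m _]mulmxA -hf [F *m (_ *m f)]mulmxA.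
  by rewrite e' mulmxA addrAC subrK addrC.
have s'g : s' *m g = 1%:M by rewrite /s' mulmxDl -[F *m f *m g]mulmxA fg mulmx0 addr0 sg.
set r := (1%:M - g *m s') *m pinvmx f.
have rf : r *m f = 1%:M - g *m s'.
  by apply: inK; rewrite mulmxBl mul1mx -mulmxA s'g mulmx1 subrr.
set P := col_mx s' f; set Q := row_mx g r.
have QP : Q *m P = 1%:M by rewrite mul_row_col rf addrC subrK.
have s'r : s' *m r = 0.
  by rewrite /r mulmxA mulmxBr mulmx1 [s' *m (g *m s')]mulmxA s'g mul1mx subrr mul0mx.
have fr : f *m r = 1%:M.
  by rewrite /r mulmxA mulmxBr mulmx1 [f *m (g *m s')]mulmxA fg mul0mx subr0 fpf.
have PQ : P *m Q = 1%:M.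
  by rewrite mul_col_row s'g s'r fg fr -scalar_mx_block.
have hP : hom (dsum A B) X P by apply: hom_col.
exists P, Q; split=> //; first exact: hom_inv hP PQ QP.
by rewrite mul_mx_row fg fr.
Qed.

End Split.

Section ExtBlock.
Variables (k : finFieldType) (L : falgType k).
Local Notation rep := (rep L).
Local Notation act := (@Defs.ract k L).
Local Notation hom V W := (@is_hom k L V W).

Lemma ext_block (A B : rep) :
  (forall D, @is_der k L (dsum A B) (dsum A B) D -> is_inner D) ->
  forall d, @is_der k L A B d -> is_inner d.
Proof.
move=> H d hd.
pose Dfun x : 'M[k]_(rdim A + rdim B) := block_mx 0 (d x) 0 0.
have Dlin : forall (c : k) u v, Dfun (c *: u + v) = c *: Dfun u + Dfun v.
  move=> c u v; rewrite /Dfun scale_block_mx add_block_mx !Sc0 !Ad0.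
  by rewrite linearP.
pose D : 'Hom(L, 'M[k]_(rdim A + rdim B)) := linfun Dfun.
have DE : forall x, D x = Dfun x by move=> x; apply: linfunE_.
have hD : @is_der k L (dsum A B) (dsum A B) D.
  move=> a b; rewrite !DE /Dfun !dsum_actE !mulmx_block hd.
  by rewrite !Mx0 !M0x ?Ad0 ?A0d add_block_mx ?Ad0 ?A0d.
have [F dF] := H D hD.
exists (ursubmx F) => x.
have := dF x; rewrite DE /Dfun dsum_actE -{1 2}(submxK F) !mulmx_block.
rewrite !Mx0 !M0x ?Ad0 ?A0d opp_block_mx add_block_mx.
by case/eq_block_mx.
Qed.

End ExtBlock.

Section Count2.
Variables (k : finFieldType) (L : falgType k).
Local Notation rep := (rep L).
Local Notation act := (@Defs.ract k L).
Local Notation hom V W := (@is_hom k L V W).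

Lemma hall_noiso (A B X : rep) : is_module A -> is_module B -> is_module X ->
  (forall d, @is_der k L A B d -> is_inner d) -> ~ iso X (dsum A B) ->
  hall X A B = 0%N.
Proof.
move=> mA mB mX Hinn niso; apply: eq_card0 => U; rewrite inE.
apply/negP => /and3P [_ /asbP [f [hf frf fU]] /asbP [g [hg fug kU]]].
have kerg : (kermx g == f)%MS.
  by apply/eqmxP; move/eqmxP: kU => kU; move/eqmxP: fU => fU; exact: eqmx_trans kU (eqmx_sym fU).
have [P [Q [hP hQ PQ QP _]]] := split_ses mA mX hf frf hg fug kerg Hinn.
by apply: niso; apply: iso_inv hP PQ QP.
Qed.

End Count2.

Section Count3.
Variables (k : finFieldType) (L : falgType k).
Local Notation rep := (rep L).
Local Notation act := (@Defs.ract k L).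
Local Notation hom V W := (@is_hom k L V W).

Lemma hall_iso (mu nu : rep) s t (X : rep) :
  indecomposable mu -> indecomposable nu -> ~ iso mu nu -> is_module X ->
  (forall d, @is_der k L (nsum s mu) (nsum t nu) d -> is_inner d) ->
  iso X (dsum (nsum s mu) (nsum t nu)) ->
  hall X (nsum s mu) (nsum t nu) = #|homset (nsum t nu) (nsum s mu)|.
Proof.
move=> imu inu niso mX Hinn isoX.
have mA : is_module (nsum s mu) by apply: module_nsum; case: imu.
have mB : is_module (nsum t nu) by apply: module_nsum; case: inu.
move: Hinn isoX mA mB.
set A := nsum s mu; set B := nsum t nu => Hinn isoX mA mB.
have [Q0 [P0 [hQ0 hP0 QP0 PQ0]]] := iso_invP isoX.
pose Phi (phi : 'M[k]_(rdim B, rdim A)) : 'M[k]_(rdim X) := <<row_mx phi 1%:M *m P0>>%MS.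
have Phi_inj : injective Phi.
  move=> phi psi E.
  have sub : (row_mx phi 1%:M *m P0 <= row_mx psi 1%:M *m P0)%MS.
    by rewrite -(genmxE (row_mx psi 1%:M *m P0)) -/(Phi psi) -E genmxE.
  have := submxMr Q0 sub; rewrite -!mulmxA PQ0 !mulmx1.
  case/submxP => D; rewrite mul_mx_row mulmx1 => /eq_row_mx [-> <-].
  by rewrite mul1mx.
rewrite /hall -(card_imset _ Phi_inj); apply: eq_card => U; rewrite inE.
apply/idP/imsetP.
- case/and3P => /eqP UU /asbP [f [hf frf fU]] /asbP [g [hg fug kU]].
  have kerg : (kermx g == f)%MS.
    by apply/eqmxP; move/eqmxP: kU => kU'; move/eqmxP: fU => fU'; exact: eqmx_trans kU' (eqmx_sym fU').
  have [P [Q [hP hQ PQ QP fQ]]] := split_ses mA mX hf frf hg fug kerg Hinn.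
  set r := Q *m col_mx (0 : 'M_(rdim A, rdim B)) 1%:M.
  have hr : hom X B r.
    by apply: homM hQ _; apply: hom_col; [apply: hom0 | apply: hom1].
  have fr : f *m r = 1%:M by rewrite /r mulmxA fQ mul_row_col !M0x A0d mulmx1.
  set f1 := lsubmx (f *m Q0); set f2 := rsubmx (f *m Q0).
  have [hf1 hf2] := hom_rowK (homM hf hQ0).
  set r1 := usubmx (P0 *m r); set r2 := dsubmx (P0 *m r).
  have [hr1 hr2] := hom_colK (homM hP0 hr).
  have e : f1 *m r1 + f2 *m r2 = 1%:M.
    by rewrite -mul_row_col hsubmxK vsubmxK mulmxA -(mulmxA f) QP0 mulmx1 fr.
  have u1 : (1%:M - f1 *m r1) \in unitmx by apply: (rad_nsum imu inu niso hf1).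
  have u2 : f2 \in unitmx.
    have : (f2 *m r2) \in unitmx.
      by have -> : f2 *m r2 = 1%:M - f1 *m r1 by rewrite -e [RHS]addrC addKr.
    by rewrite unitmx_mul => /andP [].
  set phi := invmx f2 *m f1.
  exists phi.
    by rewrite inE; apply/asbP; apply: homM => //; apply: hom_invmx.
  rewrite UU /Phi; apply/eq_genmx.
  have ef : f = f2 *m (row_mx phi 1%:M *m P0).
    rewrite mulmxA mul_mx_row /phi mulmxA mulmxV // mul1mx mulmx1.
    have -> : row_mx f1 f2 = f *m Q0 by rewrite hsubmxK.
    by rewrite -mulmxA QP0 mulmx1.
  move/eqmxP: fU => fU'; apply: eqmx_trans (eqmx_sym fU') _.
  by rewrite {1}ef; apply: eqmxMfull; rewrite row_full_unit.
- case=> phi; rewrite inE => /asbP hphi ->.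
  rewrite /Phi genmx_id eqxx /=; apply/andP; split; apply/asbP.
  + exists (row_mx phi 1%:M *m P0); split.
    * by apply: homM hP0; apply: hom_row => //; apply: hom1.
    * apply/row_freeP; exists (Q0 *m col_mx 0 1%:M).
      by rewrite mulmxA -(mulmxA _ P0) PQ0 mulmx1 mul_row_col !Mx0 A0d mulmx1.
    * by apply/eqmxP; exact: eqmx_sym (genmxE _).
  + exists (Q0 *m col_mx 1%:M (- phi)); split.
    * by apply: homM hQ0 _; apply: hom_col; [apply: hom1 | apply: homN].
    * apply/row_fullP; exists (row_mx 1%:M 0 *m P0).
      by rewrite mulmxA -(mulmxA _ P0) PQ0 mulmx1 mul_row_col mul1mx !M0x Ad0.
    * apply/andP; split; rewrite genmxE.
      - set K := kermx _.
        have : K *m Q0 *m col_mx 1%:M (- phi) = 0 by rewrite -mulmxA mulmx_ker.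
        rewrite -[K *m Q0]hsubmxK mul_row_col mulmx1 mulmxN => /eqP.
        rewrite subr_eq0 => /eqP E1.
        have -> : K = rsubmx (K *m Q0) *m (row_mx phi 1%:M *m P0).
          by rewrite mulmxA mul_mx_row mulmx1 -E1 hsubmxK -mulmxA QP0 mulmx1.
        exact: submxMl.
      - rewrite sub_kermx mulmxA -(mulmxA _ P0) PQ0 mulmx1 mul_row_col mulmx1.
        by rewrite mul1mx subrr.
Qed.

End Count3.

Unset Implicit Arguments.
Set Strict Implicit.

Theorem mainTheorem7 (k : finFieldType) (L : falgType k) (mu nu : rep L) (s t : nat) :
  hereditary L ->
  indecomposable mu -> indecomposable nu -> ~ iso mu nu ->
  (1 <= s)%N -> (1 <= t)%N ->
  exceptional (dsum (nsum s mu) (nsum t nu)) ->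
  forall X : rep L, is_module X ->
    hbasis (dsum (nsum s mu) (nsum t nu)) X =
    vq k ^ (euler (nsum t nu) (nsum s mu) - (2 * s * t * hom_dim nu mu)%N%:Z)
      * hmul_basis (nsum s mu) (nsum t nu) X.
Proof.
move=> _ imu inu niso _ _ exc X mX.
have mA : is_module (nsum s mu) by apply: module_nsum; case: imu.
have mB : is_module (nsum t nu) by apply: module_nsum; case: inu.
have mL := module_dsum mA mB.
have HL := ext0_inner mL mL exc.
have Hinn := ext_block HL.
rewrite /hbasis /hmul_basis.
case: (asbP (iso X (dsum (nsum s mu) (nsum t nu)))) => [isoX | niso'].
  rewrite (hall_iso imu inu niso mX Hinn isoX) card_homset_nsum card_homset.
  set v := vq k.
  have q0 : (0 < #|k|)%N by apply/card_gt0P; exists 0.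
  have v0 : v != 0 by rewrite /v /vq sqrtC_eq0 pnatr_eq0 -lt0n.
  rewrite mulrA -expfzDr // addrAC subrr add0r -exprnN.
  rewrite -expnM natrX -(sqrtCK (#|k|%:R)) -/(vq k) -/v -exprM.
  have -> : (2 * s * t * hom_dim nu mu = 2 * (hom_dim nu mu * (s * t)))%N.
    by rewrite (mulnC (hom_dim nu mu)) -!mulnA.
  by rewrite mulVf // expf_neq0.
by rewrite (hall_noiso mA mB mX Hinn niso') mulr0 mulr0.
Qed.
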